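(* For $\alpha\in H_R'$ let $\theta_\alpha:=\phi_{B_++\delta\alpha}\colon H_R\to H_R$. Then: (1) For every forest $w$, $\theta_\alpha(w)-w\in\bigoplus_{n=0}^{|w|-1}H_{R,n}$. (2) Each $\theta_\alpha$ is a Hopf algebra automorphism of $H_R$, with inverse $\theta_\alpha^{-1}=\theta_{-\alpha\circ\theta_\alpha}$, and for all $\alpha,\beta\in H_R'$, $\theta_\alpha\circ\theta_\beta=\theta_\gamma$ with $\gamma=\alpha+\beta\circ\theta_\alpha^{-1}$. (3) The maps $\delta\colon H_R'\to\operatorname{End}(H_R)$ and $\alpha\mapsto\theta_\alpha$ are injective. Hence $\alpha\bullet\beta:=\alpha+\beta\circ\theta_\alpha^{-1}$ defines a group structure on $H_R'$ with neutral element $0$ and inverse $\alpha^{\bullet-1}=-\alpha\circ\theta_\alpha$, such that $\alpha\mapsto\theta_\alpha$ is a group isomorphism onto its image in $\operatorname{Aut}_{\mathrm{Hopf}}(H_R)$.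
   Context: $H_R$ is the Connes–Kreimer Hopf algebra of rooted trees over a field $\mathbb K$ of characteristic zero: free commutative algebra on rooted trees, basis rooted forests, $H_{R,n}$ the span of forests with $n$ nodes, $|w|$ the number of nodes; $B_+$ grafts all trees of a forest onto a new root; coproduct with $\Delta\circ B_+=B_+\otimes\mathbb 1+(\mathrm{id}\otimes B_+)\circ\Delta$. $H_R'=\operatorname{Hom}(H_R,\mathbb K)$; for $\alpha\in H_R'$, $\delta\alpha:=(\mathrm{id}\otimes\alpha)\circ\Delta-\mathbb 1\cdot\alpha$. For $M\in\operatorname{End}(H_R)$, $\phi_M$ is the unique unital algebra morphism $H_R\to H_R$ with $\phi_M\circ B_+=M\circ\phi_M$. *)

(* Defs.v *)
(* Connes--Kreimer Hopf algebra of rooted trees, written out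
   concretely: H_R has basis the (isomorphism classes of) rooted forests,
   represented in canonical form; elements of H_R are formal linear
   combinations compared coefficientwise; linear maps H_R -> H_R are given by
   their values on the basis; H_R' = all functions forest -> K. *)
From HB Require Import structures.
From mathcomp Require Import all_boot all_order all_algebra.
Set Implicit Arguments. Unset Strict Implicit. Unset Printing Implicit Defensive.
Import GRing.Theory.
Local Open Scope ring_scope.

Inductive rtree := RNode of seq rtree.

Fixpoint enc (t : rtree) : GenTree.tree unit :=
  let: RNode s := t in GenTree.Node 0 (map enc s).
Fixpoint dec (g : GenTree.tree unit) : rtree :=
  match g with GenTree.Leaf _ => RNode [::] | GenTree.Node _ l => RNode (map dec l) end.
Fixpoint encK_aux (t : rtree) : dec (enc t) = t :=
  match t as t0 return dec (enc t0) = t0 with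
  | RNode s => f_equal RNode
      ((fix F (l : seq rtree) : map dec (map enc l) = l :=
          match l with
          | [::] => erefl
          | t' :: l' => f_equal2 cons (encK_aux t') (F l')
          end) s)
  end.
Lemma encK : cancel enc dec. Proof. exact: encK_aux. Qed.
HB.instance Definition _ := Countable.copy rtree (can_type encK).

Lemma rtree_ind2 (P : rtree -> Prop) :
  (forall s, (forall t, t \in s -> P t) -> P (RNode s)) -> forall t, P t.
Proof.
move=> H; fix IH 1; move=> [s]; apply: H.
move: s; fix IHs 1; move=> [|a s] t.
  clear IH IHs; by rewrite in_nil.
rewrite in_cons => /orP[/eqP-> | ts].
  exact: (IH a).
exact: (IHs s t ts).
Qed.

Definition tle (a b : rtree) : bool := (pickle a <= pickle b)%N.
Lemma tle_total : total tle. Proof. by move=> a b; apply: leq_total. Qed.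
Lemma tle_trans : transitive tle. Proof. by move=> a b c; apply: leq_trans. Qed.

(** Canonical representative of the isomorphism class of a rooted tree
    (children recursively canonicalised and sorted), and of a forest. *)
Fixpoint canon (t : rtree) : rtree :=
  let: RNode s := t in RNode (sort tle (map canon s)).
Definition canonF (s : seq rtree) : seq rtree := sort tle (map canon s).

Lemma canonF_idem_in (s : seq rtree) :
  (forall t, t \in s -> canon (canon t) = canon t) -> canonF (canonF s) = canonF s.
Proof.
move=> H; rewrite /canonF.
have -> : map canon (sort tle (map canon s)) = sort tle (map canon s).
  apply: map_id_in => x; rewrite mem_sort => /mapP[y ys ->]; exact: H.
apply: sorted_sort; first exact: tle_trans.
exact: sort_sorted tle_total _.
Qed.
Lemma canonK (t : rtree) : canon (canon t) = canon t.
Proof.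
elim/rtree_ind2: t => s IH /=. by congr RNode; apply: canonF_idem_in.
Qed.
Lemma canonF_idem (s : seq rtree) : canonF (canonF s) == canonF s.
Proof. by apply/eqP/canonF_idem_in => t _; exact: canonK. Qed.

(** Rooted forests = isomorphism classes of finite multisets of rooted trees,
    represented by their canonical form. The empty forest is the unit 1. *)
Record forest := Forest { fval :> seq rtree; _ : canonF fval == fval }.
HB.instance Definition _ := [isSub for fval].
HB.instance Definition _ := [Countable of forest by <:].

Definition mkF (s : seq rtree) : forest := @Forest (canonF s) (canonF_idem s).
Definition F0 : forest := mkF [::].
Definition fmul (u v : forest) : forest := mkF (fval u ++ fval v).
Definition Bp (w : forest) : forest := mkF [:: RNode (fval w)].

Fixpoint tsize (t : rtree) : nat := let: RNode s := t in (sumn (map tsize s)).+1.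
Definition fsize (w : forest) : nat := sumn (map tsize (fval w)).

Section HR.
Variable K : fieldType.

Definition vec := seq (K * forest).
Definition coef (v : vec) (w : forest) : K := \sum_(p <- v | p.2 == w) p.1.
Definition veq (v1 v2 : vec) : Prop := forall w, coef v1 w = coef v2 w.
Definition fbasis (w : forest) : vec := [:: (1, w)].
Definition vone : vec := fbasis F0.
Definition vscale (c : K) (v : vec) : vec := [seq (c * p.1, p.2) | p <- v].
Definition vmul (v1 v2 : vec) : vec :=
  [seq (p.1 * q.1, fmul p.2 q.2) | p <- v1, q <- v2].

Definition endo := forest -> vec.
Definition lin (f : endo) (v : vec) : vec := flatten [seq vscale p.1 (f p.2) | p <- v].
Definition eeq (f g : endo) : Prop := forall w, veq (f w) (g w).
Definition ecomp (f g : endo) : endo := fun w => lin f (g w).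
Definition eid : endo := fbasis.
Definition eadd (f g : endo) : endo := fun w => f w ++ g w.
Definition eBp : endo := fun w => fbasis (Bp w).

Definition dual := forest -> K.
Definition ev (a : dual) (v : vec) : K := \sum_(p <- v) p.1 * a p.2.
Definition dcomp (a : dual) (f : endo) : dual := fun w => ev a (f w).
Definition dopp (a : dual) : dual := fun w => - a w.
Definition dzero : dual := fun _ => 0.

Definition vec2 := seq (K * (forest * forest)).
Definition coef2 (x : vec2) (uv : forest * forest) : K := \sum_(p <- x | p.2 == uv) p.1.
Definition veq2 (x y : vec2) : Prop := forall uv, coef2 x uv = coef2 y uv.
Definition vone2 : vec2 := [:: (1, (F0, F0))].
Definition vmul2 (x y : vec2) : vec2 :=
  [seq (p.1 * q.1, (fmul p.2.1 q.2.1, fmul p.2.2 q.2.2)) | p <- x, q <- y].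
Definition tmap (f g : endo) (x : vec2) : vec2 :=
  flatten [seq [seq (p.1 * a.1 * b.1, (a.2, b.2)) | a <- f p.2.1, b <- g p.2.2] | p <- x].
Definition vmulT (x : vec2) : vec := [seq (p.1, fmul p.2.1 p.2.2) | p <- x].

(** Coproduct: multiplicative, with Delta (B_+ w) = B_+ w (x) 1 + (id (x) B_+) Delta w. *)
Fixpoint DeltaT (t : rtree) : vec2 :=
  let: RNode s := t in
  (1, (Bp (mkF s), F0)) ::
  [seq (p.1, (p.2.1, Bp p.2.2)) |
     p <- (fix go (l : seq rtree) : vec2 :=
             match l with [::] => vone2 | t' :: l' => vmul2 (DeltaT t') (go l') end) s].
Definition Delta (w : forest) : vec2 := foldr (fun t acc => vmul2 (DeltaT t) acc) vone2 (fval w).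
Definition Delta_lin (v : vec) : vec2 :=
  flatten [seq [seq (p.1 * q.1, q.2) | q <- Delta p.2] | p <- v].
Definition eps : dual := fun w => (w == F0)%:R.

(** delta alpha := (id (x) alpha) o Delta - 1 . alpha *)
Definition delta (a : dual) : endo :=
  fun w => [seq (p.1 * a p.2.2, p.2.1) | p <- Delta w] ++ [:: (- a w, F0)].

(** phi_M: the unital algebra morphism with phi_M o B_+ = M o phi_M. *)
Fixpoint phiT (M : endo) (t : rtree) : vec :=
  let: RNode s := t in
  lin M ((fix go (l : seq rtree) : vec :=
            match l with [::] => vone | t' :: l' => vmul (phiT M t') (go l') end) s).
Definition phi (M : endo) : endo :=
  fun w => foldr (fun t acc => vmul (phiT M t) acc) vone (fval w).

Definition theta (a : dual) : endo := phi (eadd eBp (delta a)).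

Definition alg_morph (f : endo) : Prop :=
  veq (f F0) vone /\ forall u v, veq (f (fmul u v)) (vmul (f u) (f v)).
Definition coalg_morph (f : endo) : Prop :=
  forall w, veq2 (Delta_lin (f w)) (tmap f f (Delta w)) /\ ev eps (f w) = eps w.
Definition is_antipode (S : endo) : Prop :=
  forall w, veq (vmulT (tmap S eid (Delta w))) (vscale (eps w) vone)
         /\ veq (vmulT (tmap eid S (Delta w))) (vscale (eps w) vone).
Definition hopf_morph (f : endo) : Prop :=
  [/\ alg_morph f, coalg_morph f & forall S, is_antipode S -> eeq (ecomp f S) (ecomp S f)].
Definition hopf_aut (f : endo) : Prop :=
  hopf_morph f /\ exists g : endo, eeq (ecomp f g) eid /\ eeq (ecomp g f) eid.

Definition ginv (a : dual) : dual := dopp (dcomp a (theta a)).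
Definition bullet (a b : dual) : dual := fun w => a w + dcomp b (theta (ginv a)) w.

End HR.

(* Main.v *)
Require Import Defs.
From HB Require Import structures.
From mathcomp Require Import all_boot all_order all_algebra ring zify.
From Stdlib Require Import FunctionalExtensionality.
Set Implicit Arguments. Unset Strict Implicit. Unset Printing Implicit Defensive.
Import GRing.Theory.
Local Open Scope ring_scope.

Section Gen.
Variable K : fieldType.
Variable T : eqType.
Implicit Types (x y : seq (K * T)) (a b : T -> K).
Definition gev a x : K := \sum_(p <- x) p.1 * a p.2.
Lemma gev_nil a : gev a [::] = 0. Proof. by rewrite /gev big_nil. Qed.
Lemma gev_cons a p x : gev a (p :: x) = p.1 * a p.2 + gev a x.
Proof. by rewrite /gev big_cons. Qed.
Lemma gev_cat a x y : gev a (x ++ y) = gev a x + gev a y.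
Proof. by rewrite /gev big_cat. Qed.
Lemma eq_gev a b x : a =1 b -> gev a x = gev b x.
Proof. by move=> e; apply: eq_bigr => p _; rewrite e. Qed.
Lemma gev_add a b x : gev (fun t => a t + b t) x = gev a x + gev b x.
Proof. by rewrite /gev -big_split; apply: eq_bigr => p _; rewrite mulrDr. Qed.
Lemma gev_scale c a x : gev (fun t => c * a t) x = c * gev a x.
Proof. by rewrite /gev big_distrr; apply: eq_bigr => p _; rewrite mulrCA. Qed.
Lemma gev_scaler c a x : gev (fun t => a t * c) x = gev a x * c.
Proof. by rewrite /gev big_distrl; apply: eq_bigr => p _; rewrite mulrA. Qed.
Lemma gev0 x : gev (fun _ => 0) x = 0.
Proof. by rewrite /gev big1 // => p _; rewrite mulr0. Qed.
Lemma gev_opp a x : gev (fun t => - a t) x = - gev a x.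
Proof. by rewrite /gev -sumrN; apply: eq_bigr => p _; rewrite mulrN. Qed.
Lemma gev_sub a b x : gev (fun t => a t - b t) x = gev a x - gev b x.
Proof. by rewrite gev_add gev_opp. Qed.
Lemma gev_map (U : eqType) (f : K * U -> K * T) a (z : seq (K * U)) :
  gev a (map f z) = \sum_(p <- z) (f p).1 * a (f p).2.
Proof. by rewrite /gev big_map. Qed.
Lemma gev1 a t : gev a [:: (1, t)] = a t.
Proof. by rewrite gev_cons gev_nil addr0 mul1r. Qed.

Definition gcoef x t := \sum_(p <- x | p.2 == t) p.1.
Lemma gcoefE x t : gcoef x t = gev (fun u => (u == t)%:R) x.
Proof.
rewrite /gcoef /gev big_mkcond; apply: eq_bigr => p _.
by case: (p.2 == t); rewrite ?mulr1 ?mulr0.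
Qed.
Lemma gev_coef a x s : uniq s -> {subset map snd x <= s} ->
  gev a x = \sum_(t <- s) gcoef x t * a t.
Proof.
move=> us; elim: x => [|p x IH] sub.
  by rewrite gev_nil big1 // => t _; rewrite /gcoef big_nil mul0r.
rewrite gev_cons IH; last by move=> t tx; apply: sub; rewrite /= in_cons tx orbT.
have ps : p.2 \in s by apply: sub; rewrite /= in_cons eqxx.
rewrite /gcoef.
rewrite [RHS](eq_bigr (fun t => (if p.2 == t then p.1 * a t else 0) +
   (\sum_(p0 <- x | p0.2 == t) p0.1) * a t)); last first.
  move=> t _; by rewrite big_cons; case: (p.2 == t); rewrite ?mulrDl ?add0r ?mul0r.
rewrite big_split /=; congr (_ + _).
rewrite (bigD1_seq p.2) //= eqxx big1 ?addr0 // => t; rewrite eq_sym => /negbTE -> //.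
Qed.
Lemma gveqP x y : (forall t, gcoef x t = gcoef y t) <-> (forall a, gev a x = gev a y).
Proof.
split=> [e a|e t]; last by rewrite !gcoefE e.
pose s := undup (map snd (x ++ y)).
have us : uniq s by apply: undup_uniq.
rewrite (@gev_coef a x s) // ?(@gev_coef a y s) //.
- by apply: eq_bigr => t _; rewrite e.
- by move=> t ty; rewrite mem_undup map_cat mem_cat ty orbT.
- by move=> t tx; rewrite mem_undup map_cat mem_cat tx.
Qed.
Variable mulT : T -> T -> T.
Definition gmul x y := [seq (p.1 * q.1, mulT p.2 q.2) | p <- x, q <- y].
Lemma gev_gmul a x y : gev a (gmul x y) = gev (fun t => gev (fun u => a (mulT t u)) y) x.
Proof.
rewrite /gev /gmul big_allpairs_dep; apply: eq_bigr => p _.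
by rewrite big_distrr; apply: eq_bigr => q _ /=; rewrite mulrA.
Qed.
End Gen.

Lemma gev_exch (K : fieldType) (T U : eqType) (F : T -> U -> K) (x : seq (K * T)) (z : seq (K * U)) :
  gev (fun t => gev (fun u => F t u) z) x = gev (fun u => gev (fun t => F t u) x) z.
Proof.
rewrite /gev; under eq_bigr => p _ do rewrite big_distrr.
rewrite exchange_big /=; apply: eq_bigr => q _; rewrite big_distrr /=.
by apply: eq_bigr => p _; rewrite mulrCA.
Qed.


Lemma tle_anti : antisymmetric tle.
Proof. by move=> a b /andP[h1 h2]; apply: (pcan_inj pickleK); apply/eqP; rewrite eqn_leq; apply/andP; split. Qed.

Lemma canonF_forest (w : forest) : canonF w = w.
Proof. by case: w => s /= /eqP. Qed.

Lemma canon_in (w : forest) t : t \in fval w -> canon t = t.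
Proof.
rewrite -canonF_forest /canonF mem_sort => /mapP[t' _ ->]; exact: canonK.
Qed.
Lemma map_canon (w : forest) : map canon (fval w) = fval w.
Proof. by apply: map_id_in => t; apply: canon_in. Qed.

Lemma mkF_eq s s' : perm_eq (map canon s) (map canon s') -> mkF s = mkF s'.
Proof. by move=> p; apply: val_inj => /=; apply/perm_sortP => //; [exact: tle_total|exact: tle_trans|exact: tle_anti]. Qed.
Lemma fval_mkF s : perm_eq (fval (mkF s)) (map canon s).
Proof. by rewrite /= /canonF perm_sort. Qed.
Lemma mkF_forest (w : forest) : mkF (fval w) = w.
Proof. by apply: val_inj => /=; rewrite canonF_forest. Qed.
Lemma forest_eq (u v : forest) : perm_eq (fval u) (fval v) -> u = v.
Proof. by move=> p; rewrite -(mkF_forest u) -(mkF_forest v); apply: mkF_eq; rewrite !map_canon. Qed.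

Lemma fval_fmul u v : perm_eq (fval (fmul u v)) (fval u ++ fval v).
Proof. by rewrite (permPl (fval_mkF _)) map_cat !map_canon. Qed.
Lemma fmulC u v : fmul u v = fmul v u.
Proof. by apply: forest_eq; rewrite (permPl (fval_fmul _ _)) (permPr (fval_fmul _ _)) perm_catC. Qed.
Lemma fmulA u v w : fmul u (fmul v w) = fmul (fmul u v) w.
Proof.
apply: forest_eq; rewrite (permPl (fval_fmul _ _)) (permPr (fval_fmul _ _)).
apply: (@perm_trans _ (fval u ++ (fval v ++ fval w))); first by rewrite perm_cat2l fval_fmul.
by rewrite catA perm_cat2r perm_sym fval_fmul.
Qed.
Lemma fval_F0 : fval F0 = [::]. Proof. by []. Qed.
Lemma fmul0f u : fmul F0 u = u.
Proof. by apply: forest_eq; rewrite (permPl (fval_fmul _ _)). Qed.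
Lemma fmulf0 u : fmul u F0 = u.
Proof. by rewrite fmulC fmul0f. Qed.
Lemma fmulI u v v' : fmul u v = fmul u v' -> v = v'.
Proof.
move=> e; apply: forest_eq; rewrite -(perm_cat2l (fval u)).
by rewrite -(permPl (fval_fmul _ _)) e fval_fmul.
Qed.
Lemma forest0 (w : forest) : fval w = [::] -> w = F0.
Proof. by move=> e; apply: forest_eq; rewrite e. Qed.

Lemma tsize_canon t : Defs.tsize (canon t) = Defs.tsize t.
Proof.
elim/rtree_ind2: t => s IH /=; congr (_.+1).
rewrite (perm_sumn (perm_map _ (permEl (perm_sort _ _)))) -map_comp.
by congr sumn; apply/eq_in_map => t /IH.
Qed.
Lemma fsize_perm (u v : forest) : perm_eq (fval u) (fval v) -> fsize u = fsize v.
Proof. by move=> p; apply: perm_sumn; apply: perm_map. Qed.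
Lemma fsize_fmul u v : fsize (fmul u v) = (fsize u + fsize v)%N.
Proof. by rewrite /fsize (perm_sumn (perm_map _ (fval_fmul _ _))) map_cat sumn_cat. Qed.
Lemma fsize_F0 : fsize F0 = 0%N. Proof. by []. Qed.
Lemma fval_Bp w : fval (Bp w) = [:: RNode (fval w)].
Proof. by rewrite /= /canonF /= -/(canonF w) canonF_forest. Qed.
Lemma fsize_Bp w : fsize (Bp w) = (fsize w).+1.
Proof. by rewrite /fsize fval_Bp /= addn0. Qed.
Lemma Bp_inj : injective Bp.
Proof. by move=> u v e; apply: val_inj; move: (congr1 fval e); rewrite !fval_Bp => -[]. Qed.
Lemma fsize0 w : fsize w = 0%N -> w = F0.
Proof.
case: w => [[|t s] h] e; first by apply: val_inj.
by move: e; rewrite /fsize /=; case: t h => cs h; rewrite addSn.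
Qed.

Lemma forest_decomp (w : forest) t r : fval w = t :: r ->
  exists c r' : forest, [/\ w = fmul (Bp c) r', t = RNode (fval c) & fval r' = r].
Proof.
move=> ew; case: t ew => cs ew.
have ct : canon (RNode cs) = RNode cs by apply: (canon_in (w:=w)); rewrite ew mem_head.
have hc : canonF cs == cs by apply/eqP; case: ct.
have sw : sorted tle (fval w) by rewrite -canonF_forest; apply: sort_sorted; exact: tle_total.
have hr : canonF r == r.
  apply/eqP; rewrite /canonF (@map_id_in _ canon r).
    by apply: sorted_sort; [exact: tle_trans | move: sw; rewrite ew => /path_sorted].
  by move=> x xr; apply: (canon_in (w:=w)); rewrite ew in_cons xr orbT.
exists (Forest hc), (Forest hr); split=> //.
apply: forest_eq; rewrite perm_sym (permPl (fval_fmul _ _)) fval_Bp ew //.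
Qed.

Lemma forest_ind (P : forest -> Prop) :
  P F0 -> (forall c r, P c -> P r -> P (fmul (Bp c) r)) -> forall w, P w.
Proof.
move=> P0 PS w.
have : (fsize w <= fsize w)%N by [].
move: {2}(fsize w) => n; elim: n w => [|n IH] w hs.
  by move: hs; rewrite leqn0 => /eqP/fsize0 ->.
case ew: (fval w) => [|t r]; first by rewrite (forest0 ew).
have [c [r' [ew' et er]]] := forest_decomp ew.
move: hs; rewrite ew' fsize_fmul fsize_Bp addSn ltnS => hs.
apply: PS; apply: IH; apply: leq_trans hs; [exact: leq_addr | exact: leq_addl].
Qed.

Section GProd.
Variable K : fieldType.
Variable T : eqType.
Variable mulT : T -> T -> T.
Variable e : T.
Hypothesis mulTC : forall x y, mulT x y = mulT y x.
Hypothesis mulTA : forall x y z, mulT x (mulT y z) = mulT (mulT x y) z.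
Hypothesis mul1T : forall x, mulT e x = x.
Implicit Types (x y z : seq (K * T)) (a b : T -> K).
Definition gone : seq (K * T) := [:: (1, e)].
Definition gprod (g : rtree -> seq (K * T)) l :=
  foldr (fun t acc => gmul mulT (g t) acc) gone l.
Lemma gev_gmul1 a y : gev a (gmul mulT gone y) = gev a y.
Proof. by rewrite gev_gmul gev1; apply: eq_gev => u; rewrite mul1T. Qed.
Lemma gev_gmulC a x y : gev a (gmul mulT x y) = gev a (gmul mulT y x).
Proof. by rewrite !gev_gmul gev_exch; apply: eq_gev => u; apply: eq_gev => t; rewrite mulTC. Qed.
Lemma gev_gmulA a x y z :
  gev a (gmul mulT x (gmul mulT y z)) = gev a (gmul mulT (gmul mulT x y) z).
Proof.
rewrite !gev_gmul; apply: eq_gev => t; rewrite gev_gmul.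
by apply: eq_gev => u; apply: eq_gev => v; rewrite mulTA.
Qed.
Lemma gev_gmull a x (x' : seq (K * T)) y : (forall b, gev b x = gev b x') -> gev a (gmul mulT x y) = gev a (gmul mulT x' y).
Proof. by move=> h; rewrite !gev_gmul h. Qed.
Lemma gev_gmulr a x y (y' : seq (K * T)) : (forall b, gev b y = gev b y') -> gev a (gmul mulT x y) = gev a (gmul mulT x y').
Proof. by move=> h; rewrite !gev_gmul; apply: eq_gev => t; rewrite h. Qed.
Lemma gprod_cat g l1 l2 a :
  gev a (gprod g (l1 ++ l2)) = gev a (gmul mulT (gprod g l1) (gprod g l2)).
Proof.
elim: l1 a => [|t l1 IH] a /=; first by rewrite gev_gmul1.
rewrite -gev_gmulA; apply: gev_gmulr => b; exact: IH.
Qed.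
Lemma gprod_perm g l l' a : perm_eq l l' -> gev a (gprod g l) = gev a (gprod g l').
Proof.
move=> p; move: a.
have := @catCA_perm_ind _ (fun s => forall a, gev a (gprod g s) = gev a (gprod g l')).
move=> /(_ _ l' l); rewrite perm_sym p => H; apply: H => //.
move=> s1 s2 s3 h a; rewrite -h gprod_cat [RHS]gprod_cat.
rewrite (@gev_gmulr _ _ _ (gmul mulT (gprod g s1) (gprod g s3))); last by move=> b; exact: gprod_cat.
rewrite [RHS](@gev_gmulr _ _ _ (gmul mulT (gprod g s2) (gprod g s3))); last by move=> b; exact: gprod_cat.
rewrite !gev_gmulA; apply: gev_gmull => b; exact: gev_gmulC.
Qed.
End GProd.

Section Vec.
Variable K : fieldType.
Implicit Types (b : forest -> forest -> K) (x y : vec K) (a c : dual K) (f g : endo K) (X Y : vec2 K).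

Definition mulT2 (p q : forest * forest) := (fmul p.1 q.1, fmul p.2 q.2).
Definition ev2 (b : forest -> forest -> K) (x : vec2 K) := gev (fun uv => b uv.1 uv.2) x.

Lemma evE a v : ev a v = gev a v. Proof. by []. Qed.
Lemma ev_cat a x y : ev a (x ++ y) = ev a x + ev a y. Proof. exact: gev_cat. Qed.
Lemma ev_cons a p x : ev a (p :: x) = p.1 * a p.2 + ev a x. Proof. exact: gev_cons. Qed.
Lemma ev_fbasis a w : ev a (fbasis K w) = a w. Proof. exact: gev1. Qed.
Lemma ev_vone a : ev a (vone K) = a F0. Proof. exact: gev1. Qed.
Lemma eq_ev a c (v : vec K) : a =1 c -> ev a v = ev c v. Proof. exact: eq_gev. Qed.
Lemma ev_vscale a k (v : vec K) : ev a (vscale k v) = k * ev a v.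
Proof. by rewrite /ev /vscale big_map big_distrr; apply: eq_bigr => p _ /=; rewrite mulrA. Qed.
Lemma ev_lin a f (v : vec K) : ev a (lin f v) = ev (fun w => ev a (f w)) v.
Proof.
rewrite /lin /ev big_flatten big_map; apply: eq_bigr => p _.
exact: ev_vscale.
Qed.
Lemma ev_vmul a x y : ev a (vmul x y) = ev (fun u => ev (fun w => a (fmul u w)) y) x.
Proof. exact: gev_gmul. Qed.
Lemma veqP x y : veq x y <-> forall a, ev a x = ev a y.
Proof. exact: gveqP. Qed.
Lemma ev_add a c (v : vec K) : ev (fun t => a t + c t) v = ev a v + ev c v. Proof. exact: gev_add. Qed.
Lemma ev_sub a c (v : vec K) : ev (fun t => a t - c t) v = ev a v - ev c v. Proof. exact: gev_sub. Qed.
Lemma ev_opp a (v : vec K) : ev (fun t => - a t) v = - ev a v. Proof. exact: gev_opp. Qed.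
Lemma ev_scale k a (v : vec K) : ev (fun t => k * a t) v = k * ev a v. Proof. exact: gev_scale. Qed.
Lemma ev_scaler k a (v : vec K) : ev (fun t => a t * k) v = ev a v * k. Proof. exact: gev_scaler. Qed.
Lemma ev0 (v : vec K) : ev (fun _ => 0) v = 0. Proof. exact: gev0. Qed.
Lemma ev2E b X : ev2 b X = \sum_(p <- X) p.1 * b p.2.1 p.2.2. Proof. by []. Qed.
Lemma ev2_cat b X Y : ev2 b (X ++ Y) = ev2 b X + ev2 b Y. Proof. exact: gev_cat. Qed.
Lemma ev2_cons b p X : ev2 b (p :: X) = p.1 * b p.2.1 p.2.2 + ev2 b X. Proof. exact: gev_cons. Qed.
Lemma eq_ev2 (b b' : forest -> forest -> K) X : (forall u1 u2 : forest, b u1 u2 = b' u1 u2) -> ev2 b X = ev2 b' X.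
Proof. by move=> h; apply: eq_gev => p; rewrite h. Qed.
Lemma veq2P X Y : veq2 X Y <-> forall b, ev2 b X = ev2 b Y.
Proof.
rewrite /veq2 /coef2; split=> [h b|h].
  by move/gveqP: h => h; apply: h.
apply/gveqP => a; have := h (fun u w => a (u, w)); rewrite /ev2.
by rewrite (@eq_gev _ _ _ a) ?[in X in _ = X -> _](@eq_gev _ _ _ a) // => -[].
Qed.
Lemma ev2_vone2 b : ev2 b (vone2 K) = b F0 F0. Proof. exact: gev1. Qed.
Lemma ev2_vmul2 b X Y :
  ev2 b (vmul2 X Y) = ev2 (fun u1 u2 => ev2 (fun v1 v2 => b (fmul u1 v1) (fmul u2 v2)) Y) X.
Proof. exact: (@gev_gmul _ _ mulT2). Qed.
Lemma ev2_tmap b f g X :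
  ev2 b (tmap f g X) = ev2 (fun u w => ev (fun u' => ev (fun v' => b u' v') (g w)) (f u)) X.
Proof.
rewrite /ev2 /tmap /gev big_flatten big_map; apply: eq_bigr => p _.
rewrite big_allpairs_dep /= big_distrr; apply: eq_bigr => q _.
rewrite /ev /gev big_distrr big_distrr; apply: eq_bigr => r _ /=.
by rewrite !mulrA.
Qed.
Lemma ev_vmulT a X : ev a (vmulT X) = ev2 (fun u w => a (fmul u w)) X.
Proof. by rewrite /ev /vmulT big_map. Qed.
Lemma ev2_Delta_lin b (v : vec K) : ev2 b (Delta_lin v) = ev (fun w => ev2 b (Delta K w)) v.
Proof.
rewrite /ev2 /Delta_lin /gev big_flatten big_map; apply: eq_bigr => p _.
by rewrite big_map big_distrr; apply: eq_bigr => q _ /=; rewrite mulrA.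
Qed.
Lemma ev_delta c a w : ev c (delta a w) = ev2 (fun p q => c p * a q) (Delta K w) - a w * c F0.
Proof.
rewrite /delta ev_cat ev_cons /ev /gev big_nil addr0 big_map mulNr; congr (_ - _).
by apply: eq_bigr => p _ /=; rewrite mulrAC mulrA.
Qed.
Lemma ev2_ev b X : ev2 b X = ev2 b X. Proof. by []. Qed.
End Vec.

Section Morph.
Variable K : fieldType.
Implicit Types (b : forest -> forest -> K) (x y : vec K) (a c : dual K) (f g M : endo K).

Lemma phiE M w : phi M w = gprod fmul F0 (phiT M) (fval w). Proof. by []. Qed.
Lemma DeltaE w : Delta K w = gprod mulT2 (F0, F0) (DeltaT K) (fval w). Proof. by []. Qed.

Lemma mulT2C p q : mulT2 p q = mulT2 q p.
Proof. by rewrite /mulT2 fmulC [fmul p.2 _]fmulC. Qed.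
Lemma mulT2A p q r : mulT2 p (mulT2 q r) = mulT2 (mulT2 p q) r.
Proof. by rewrite /mulT2 /= !fmulA. Qed.
Lemma mulT21 p : mulT2 (F0, F0) p = p.
Proof. by case: p => u w; rewrite /mulT2 /= !fmul0f. Qed.

Lemma phi_mul M u w a : ev a (phi M (fmul u w)) = ev a (vmul (phi M u) (phi M w)).
Proof.
rewrite !phiE evE (gprod_perm fmulC fmulA fmul0f _ _ (fval_fmul u w)).
by rewrite (gprod_cat fmulA fmul0f).
Qed.
Lemma phi_F0 M : phi M F0 = vone K. Proof. by []. Qed.
Lemma phiT_node M s :
  phiT M (RNode s) = lin M (foldr (fun t acc => vmul (phiT M t) acc) (vone K) s).
Proof. by rewrite /=; congr lin; elim: s => //= t s ->. Qed.
Lemma phi_Bp M w a : ev a (phi M (Bp w)) = ev a (lin M (phi M w)).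
Proof.
rewrite /phi fval_Bp /= ev_vmul; rewrite -/(phiT M (RNode (fval w))) phiT_node.
by apply: eq_ev => u; rewrite ev_vone fmulf0.
Qed.

Lemma Delta_mul b u w : ev2 b (Delta K (fmul u w)) = ev2 b (vmul2 (Delta K u) (Delta K w)).
Proof.
rewrite !DeltaE /ev2 (gprod_perm mulT2C mulT2A mulT21 _ _ (fval_fmul u w)).
by rewrite (gprod_cat mulT2A mulT21).
Qed.
Lemma Delta_F0 : Delta K F0 = vone2 K. Proof. by []. Qed.
Lemma DeltaT_node s :
  DeltaT K (RNode s) = (1, (Bp (mkF s), F0)) ::
    [seq (p.1, (p.2.1, Bp p.2.2)) | p <- foldr (fun t acc => vmul2 (DeltaT K t) acc) (vone2 K) s].
Proof. by rewrite /=; congr (_ :: map _ _); elim: s => //= t s ->. Qed.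
Lemma Delta_Bp b w : ev2 b (Delta K (Bp w)) = b (Bp w) F0 + ev2 (fun p q => b p (Bp q)) (Delta K w).
Proof.
rewrite /Delta fval_Bp /= ev2_vmul2; rewrite -/(DeltaT K (RNode (fval w))) DeltaT_node.
rewrite ev2_cons mkF_forest /= mul1r ev2_vone2 !fmulf0; congr (_ + _).
rewrite /ev2 /gev big_map; apply: eq_bigr => p _ /=; by rewrite big_cons big_nil addr0 mul1r !fmulf0.
Qed.

Definition am f := (forall a, ev a (f F0) = a F0) /\
  forall u w a, ev a (f (fmul u w)) = ev a (vmul (f u) (f w)).
Definition bpc f M := forall w a, ev a (f (Bp w)) = ev a (lin M (f w)).

Lemma am_step f M (ch r : forest) a : am f -> bpc f M ->
  ev a (f (fmul (Bp ch) r)) = ev (fun w => ev (fun u => ev (fun z => a (fmul u z)) (f r)) (M w)) (f ch).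
Proof. by move=> [_ hm] hb; rewrite hm ev_vmul hb ev_lin. Qed.

Lemma am_unique f g M : am f -> am g -> bpc f M -> bpc g M ->
  forall w a, ev a (f w) = ev a (g w).
Proof.
move=> af ag bf bg; elim/forest_ind => [|ch r IHc IHr] a.
  by rewrite af.1 ag.1.
rewrite (am_step _ _ _ af bf) (am_step _ _ _ ag bg) IHc; apply: eq_ev => w.
by apply: eq_ev => u; rewrite IHr.
Qed.

Lemma am_phi M : am (phi M).
Proof. by split=> [a|]; [rewrite phi_F0 ev_vone | exact: phi_mul]. Qed.
Lemma bpc_phi M : bpc (phi M) M.
Proof. exact: phi_Bp. Qed.
End Morph.

Section Coalg.
Variable K : fieldType.
Implicit Types (b : forest -> forest -> K) (a c : dual K) (f g M : endo K).
Local Notation D := (Delta K).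
Local Notation e := (eps K).

Lemma ev2_exch (F : forest -> forest -> forest -> forest -> K) (X Y : vec2 K) :
  ev2 (fun x1 x2 => ev2 (fun y1 y2 => F x1 x2 y1 y2) Y) X =
  ev2 (fun y1 y2 => ev2 (fun x1 x2 => F x1 x2 y1 y2) X) Y.
Proof. exact: (gev_exch (fun p q => F p.1 p.2 q.1 q.2)). Qed.
Lemma ev_ev2_exch (F : forest -> forest -> forest -> K) (X : vec2 K) (v : vec K) :
  ev2 (fun x1 x2 => ev (fun y => F x1 x2 y) v) X =
  ev (fun y => ev2 (fun x1 x2 => F x1 x2 y) X) v.
Proof. exact: (gev_exch (fun p q => F p.1 p.2 q)). Qed.
Lemma ev_exch (F : forest -> forest -> K) (v v' : vec K) :
  ev (fun x => ev (fun y => F x y) v') v = ev (fun y => ev (fun x => F x y) v) v'.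
Proof. exact: gev_exch. Qed.

Lemma ev2_add b b' X : ev2 (fun p q => b p q + b' p q) X = ev2 b X + ev2 b' X.
Proof. exact: (gev_add (fun pq => b pq.1 pq.2)). Qed.
Lemma ev2_scale k b X : ev2 (fun p q => k * b p q) X = k * ev2 b X.
Proof. exact: (gev_scale k (fun pq => b pq.1 pq.2)). Qed.
Lemma ev2_sub b b' X : ev2 (fun p q => b p q - b' p q) X = ev2 b X - ev2 b' X.
Proof. exact: (gev_sub (fun pq => b pq.1 pq.2)). Qed.
Lemma ev2_0 (X : vec2 K) : ev2 (fun _ _ => 0) X = 0.
Proof. exact: gev0. Qed.

Lemma eps_fmul u w : e (fmul u w) = e u * e w.
Proof.
rewrite /eps; case: (u =P F0) => [->|nu]; first by rewrite fmul0f mul1r.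
rewrite mul0r; case: eqP => // h; case: nu; apply: fsize0.
by move: (congr1 fsize h); rewrite fsize_fmul fsize_F0 => /eqP; rewrite addn_eq0 => /andP[/eqP].
Qed.
Lemma eps_Bp w : e (Bp w) = 0.
Proof. by rewrite /eps; case: eqP => // h; move: (congr1 fsize h); rewrite fsize_Bp. Qed.
Lemma eps_F0 : e F0 = 1. Proof. by rewrite /eps eqxx. Qed.

Lemma counit_r w : forall c, ev2 (fun p q => c p * e q) (D w) = c w.
Proof.
elim/forest_ind: w => [|ch r IHc IHr] c.
  by rewrite Delta_F0 ev2_vone2 eps_F0 mulr1.
rewrite Delta_mul ev2_vmul2.
transitivity (ev2 (fun u1 u2 => c (fmul u1 r) * e u2) (D (Bp ch))); last first.
  by rewrite Delta_Bp eps_F0 mulr1 (eq_ev2 (b' := fun _ _ => 0)) ?ev2_0 ?addr0 // => p q; rewrite eps_Bp mulr0.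
apply: eq_ev2 => u1 u2; rewrite -(IHr (fun z => c (fmul u1 z) * e u2)); apply: eq_ev2 => v1 v2.
by rewrite eps_fmul mulrA.
Qed.
Lemma counit_l w : forall c, ev2 (fun p q => e p * c q) (D w) = c w.
Proof.
elim/forest_ind: w => [|ch r IHc IHr] c.
  by rewrite Delta_F0 ev2_vone2 eps_F0 mul1r.
rewrite Delta_mul ev2_vmul2.
transitivity (ev2 (fun u1 u2 => e u1 * c (fmul u2 r)) (D (Bp ch))); last first.
  by rewrite Delta_Bp eps_Bp mul0r add0r (IHc (fun q => c (fmul (Bp q) r))).
apply: eq_ev2 => u1 u2; rewrite -(IHr (fun z => c (fmul u2 z))) -ev2_scale; apply: eq_ev2 => v1 v2.
by rewrite eps_fmul mulrA.
Qed.

Lemma coassoc w : forall (t : forest -> forest -> forest -> K),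
  ev2 (fun x y => ev2 (fun x1 x2 => t x1 x2 y) (D x)) (D w) =
  ev2 (fun x y => ev2 (fun y1 y2 => t x y1 y2) (D y)) (D w).
Proof.
elim/forest_ind: w => [|ch r IHc IHr] t.
  by rewrite !(Delta_F0, ev2_vone2).
have Hm : forall u v, (forall t, ev2 (fun x y => ev2 (fun x1 x2 => t x1 x2 y) (D x)) (D u) =
  ev2 (fun x y => ev2 (fun y1 y2 => t x y1 y2) (D y)) (D u)) ->
  (forall t, ev2 (fun x y => ev2 (fun x1 x2 => t x1 x2 y) (D x)) (D v) =
  ev2 (fun x y => ev2 (fun y1 y2 => t x y1 y2) (D y)) (D v)) ->
  ev2 (fun x y => ev2 (fun x1 x2 => t x1 x2 y) (D x)) (D (fmul u v)) =
  ev2 (fun x y => ev2 (fun y1 y2 => t x y1 y2) (D y)) (D (fmul u v)).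
  move=> u v Hu Hv; rewrite !Delta_mul !ev2_vmul2.
  transitivity (ev2 (fun u1 u2 => ev2 (fun s1 s2 => ev2 (fun v1 v2 =>
      ev2 (fun q1 q2 => t (fmul s1 q1) (fmul s2 q2) (fmul u2 v2)) (D v1)) (D v)) (D u1)) (D u)).
    apply: eq_ev2 => u1 u2; rewrite ev2_exch; apply: eq_ev2 => v1 v2.
    by rewrite Delta_mul ev2_vmul2.
  transitivity (ev2 (fun u1 u2 => ev2 (fun s1 s2 => ev2 (fun v1 v2 =>
      ev2 (fun z1 z2 => t (fmul s1 v1) (fmul s2 z1) (fmul u2 z2)) (D v2)) (D v)) (D u1)) (D u)).
    by apply: eq_ev2 => u1 u2; apply: eq_ev2 => s1 s2; rewrite Hv.
  rewrite (Hu (fun s1 s2 u2 => ev2 (fun v1 v2 =>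
      ev2 (fun z1 z2 => t (fmul s1 v1) (fmul s2 z1) (fmul u2 z2)) (D v2)) (D v))).
  apply: eq_ev2 => u1 u2; rewrite ev2_exch; apply: eq_ev2 => v1 v2.
  by rewrite Delta_mul ev2_vmul2.
apply: Hm => // t'.
have L : ev2 (fun x y => ev2 (fun x1 x2 => t' x1 x2 y) (D x)) (D (Bp ch)) =
   t' (Bp ch) F0 F0 + ev2 (fun p q => t' p (Bp q) F0) (D ch) +
   ev2 (fun p q => ev2 (fun x1 x2 => t' x1 x2 (Bp q)) (D p)) (D ch).
  by rewrite (@Delta_Bp K) (@Delta_Bp K).
have R : ev2 (fun x y => ev2 (fun y1 y2 => t' x y1 y2) (D y)) (D (Bp ch)) =
   t' (Bp ch) F0 F0 + ev2 (fun p q => t' p (Bp q) F0) (D ch) +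
   ev2 (fun p q => ev2 (fun y1 y2 => t' p y1 (Bp y2)) (D q)) (D ch).
  rewrite (@Delta_Bp K) Delta_F0 ev2_vone2 -addrA; apply: f_equal; rewrite -ev2_add.
  by apply: eq_ev2 => p q; rewrite (@Delta_Bp K).
rewrite L R -!addrA; congr (_ + (_ + _)).
exact: (IHc (fun x1 x2 y => t' x1 x2 (Bp y))).
Qed.

Lemma restrict_mul (cond : forest -> forest -> forest -> bool) u v :
  (forall u1 u2 v1 v2, cond u u1 u2 -> cond v v1 v2 -> cond (fmul u v) (fmul u1 v1) (fmul u2 v2)) ->
  (forall b, ev2 b (D u) = ev2 (fun p q => if cond u p q then b p q else 0) (D u)) ->
  (forall b, ev2 b (D v) = ev2 (fun p q => if cond v p q then b p q else 0) (D v)) ->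
  forall b, ev2 b (D (fmul u v)) =
     ev2 (fun p q => if cond (fmul u v) p q then b p q else 0) (D (fmul u v)).
Proof.
move=> hc Hu Hv.
have G : forall b, ev2 b (D (fmul u v)) = ev2 (fun u1 u2 => if cond u u1 u2 then
   ev2 (fun v1 v2 => if cond v v1 v2 then b (fmul u1 v1) (fmul u2 v2) else 0) (D v) else 0) (D u).
  move=> b; rewrite Delta_mul ev2_vmul2 Hu; apply: eq_ev2 => u1 u2.
  by case: (cond u u1 u2) => //; rewrite Hv.
move=> b; rewrite !G; apply: eq_ev2 => u1 u2; case cu: (cond u u1 u2) => //.
apply: eq_ev2 => v1 v2; case cv: (cond v v1 v2) => //.
by rewrite hc.
Qed.

Lemma Delta_size w : forall b,
  ev2 b (D w) = ev2 (fun p q => if (fsize p + fsize q == fsize w)%N then b p q else 0) (D w).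
Proof.
elim/forest_ind: w => [|ch r IHc IHr].
  by move=> b; rewrite Delta_F0 !ev2_vone2 fsize_F0.
apply: (restrict_mul (cond := fun w p q => (fsize p + fsize q == fsize w)%N)) => //.
  by move=> u1 u2 v1 v2 /eqP h1 /eqP h2; rewrite !fsize_fmul -h1 -h2 addnACA.
move=> b; rewrite (@Delta_Bp K) [RHS](@Delta_Bp K) fsize_F0 addn0 eqxx; apply: f_equal.
rewrite (IHc (fun p q => b p (Bp q))) (IHc (fun p q => if _ then _ else _)); apply: eq_ev2 => p q; rewrite !fsize_Bp addnS eqSS.
by case: (_ == _).
Qed.

End Coalg.

Section Theta.
Variable K : fieldType.
Implicit Types (b : forest -> forest -> K) (a c : dual K) (f g M : endo K).
Local Notation D := (Delta K).
Local Notation e := (eps K).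
Definition Mth a : endo K := eadd (eBp K) (delta a).

Lemma ev_eadd c f g w : ev c (eadd f g w) = ev c (f w) + ev c (g w).
Proof. exact: ev_cat. Qed.
Lemma ev_M c a w : ev c (Mth a w) = c (Bp w) + (ev2 (fun p q => c p * a q) (D w) - a w * c F0).
Proof. by rewrite ev_eadd ev_fbasis ev_delta. Qed.

Definition cocycle M := forall v b,
  ev (fun z => ev2 b (D z)) (M v) = ev (fun z => b z F0) (M v) + ev2 (fun x y => ev (b x) (M y)) (D v).

Lemma cocycle_M a : cocycle (Mth a).
Proof.
move=> v b; rewrite !ev_M (@Delta_Bp K) Delta_F0 ev2_vone2.
have E1 : ev2 (fun p q => ev2 b (D p) * a q) (D v) =
          ev2 (fun x y => ev2 (fun y1 y2 => b x y1 * a y2) (D y)) (D v).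
  rewrite -(coassoc v (fun x1 x2 y => b x1 x2 * a y)); apply: eq_ev2 => p q.
  by rewrite /ev2 -gev_scaler.
have E2 : ev2 (fun x y => ev (b x) (Mth a y)) (D v) =
   ev2 (fun x y => b x (Bp y)) (D v) + ev2 (fun x y => ev2 (fun y1 y2 => b x y1 * a y2) (D y)) (D v)
   - ev2 (fun x y => b x F0 * a y) (D v).
  rewrite -ev2_add -ev2_sub; apply: eq_ev2 => x y; rewrite ev_M.
  by rewrite addrA mulrC.
rewrite E1 E2; ring.
Qed.

Definition CMf f w := forall b,
  ev (fun z => ev2 b (D z)) (f w) = ev2 (fun x y => ev (fun x' => ev (fun y' => b x' y') (f y)) (f x)) (D w).

Lemma CM_all f M : am f -> bpc f M -> cocycle M -> forall w, CMf f w.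
Proof.
move=> [f0 fm] fb cM; elim/forest_ind => [|ch r IHc IHr].
  by move=> b; rewrite f0 Delta_F0 !ev2_vone2 f0 /= f0.
have HB : CMf f (Bp ch).
  move=> b; rewrite fb ev_lin.
  rewrite (eq_ev (c := fun v => ev (fun z => b z F0) (M v) + ev2 (fun x y => ev (b x) (M y)) (D v))); last first.
    by move=> v; apply: cM.
  rewrite ev_add -ev_lin -fb IHc (@Delta_Bp K); congr (_ + _).
    by apply: eq_ev => x'; rewrite f0.
  apply: eq_ev2 => x y; apply: eq_ev => x'; rewrite fb ev_lin.
  by [].
move=> b; rewrite fm ev_vmul.
transitivity (ev (fun s => ev2 (fun s1 s2 => ev2 (fun x y => ev (fun x' => ev (fun y' =>
   b (fmul s1 x') (fmul s2 y')) (f y)) (f x)) (D r)) (D s)) (f (Bp ch))).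
  apply: eq_ev => s.
  transitivity (ev (fun t => ev2 (fun s1 s2 => ev2 (fun t1 t2 => b (fmul s1 t1) (fmul s2 t2)) (D t)) (D s)) (f r)).
    by apply: eq_ev => t; rewrite Delta_mul ev2_vmul2.
  rewrite -(ev_ev2_exch (fun s1 s2 t => ev2 (fun t1 t2 => b (fmul s1 t1) (fmul s2 t2)) (D t))); apply: eq_ev2 => s1 s2.
  exact: (IHr (fun t1 t2 => b (fmul s1 t1) (fmul s2 t2))).
rewrite HB Delta_mul ev2_vmul2; apply: eq_ev2 => u1 u2.
transitivity (ev2 (fun v1 v2 => ev (fun p1 => ev (fun p2 => ev (fun q1 => ev (fun q2 =>
   b (fmul p1 q1) (fmul p2 q2)) (f v2)) (f v1)) (f u2)) (f u1)) (D r)).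
  apply: eq_trans (esym (ev_ev2_exch (fun v1 v2 p1 => ev (fun p2 => ev (fun q1 => ev (fun q2 =>
     b (fmul p1 q1) (fmul p2 q2)) (f v2)) (f v1)) (f u2)) (D r) (f u1))).
  apply: eq_ev => p1.
  exact: (esym (ev_ev2_exch (fun v1 v2 p2 => ev (fun q1 => ev (fun q2 =>
     b (fmul p1 q1) (fmul p2 q2)) (f v2)) (f v1)) (D r) (f u2))).
apply: eq_ev2 => v1 v2; rewrite fm ev_vmul; apply: eq_ev => p1.
rewrite ev_exch; apply: eq_ev => q1.
by rewrite fm ev_vmul.
Qed.

Lemma counit_all f M : am f -> bpc f M -> (forall v, ev e (M v) = 0) -> forall w, ev e (f w) = e w.
Proof.
move=> [f0 fm] fb hM; elim/forest_ind => [|ch r IHc IHr].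
  by rewrite f0.
rewrite fm ev_vmul (eq_ev (c := fun u => e u * e r)).
  by rewrite ev_scaler fb ev_lin (eq_ev (c := fun _ => 0)) ?ev0 ?eps_fmul ?eps_Bp ?mul0r.
by move=> u; rewrite (eq_ev (c := fun z => e u * e z)) ?ev_scale ?IHr // => z; rewrite eps_fmul.
Qed.

Lemma eps_M a v : ev e (Mth a v) = 0.
Proof.
rewrite ev_M eps_Bp add0r (counit_l v a) eps_F0 mulr1; exact: subrr.
Qed.

Lemma am_theta a : am (theta a). Proof. exact: am_phi. Qed.
Lemma bpc_theta a : bpc (theta a) (Mth a). Proof. exact: bpc_phi. Qed.
Lemma theta_F0 a : theta a F0 = vone K. Proof. by []. Qed.
Lemma CM_theta a w : CMf (theta a) w.
Proof. exact: (CM_all (am_theta a) (bpc_theta a) (@cocycle_M a)). Qed.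
Lemma counit_theta a w : ev e (theta a w) = e w.
Proof. exact: (counit_all (am_theta a) (bpc_theta a) (@eps_M a)). Qed.
End Theta.

Section Group.
Variable K : fieldType.
Implicit Types (b : forest -> forest -> K) (a c d : dual K) (f g M : endo K).
Local Notation D := (Delta K).
Local Notation e := (eps K).

Definition veqf f g := forall w c, ev c (f w) = ev c (g w).

Lemma ev2_opp b (X : vec2 K) : ev2 (fun p q => - b p q) X = - ev2 b X.
Proof. exact: (gev_opp (fun pq => b pq.1 pq.2)). Qed.
Lemma delta_opp a c v : ev c (delta (dopp a) v) = - ev c (delta a v).
Proof.
rewrite !ev_delta (eq_ev2 (b' := fun p q => - (c p * a q))) ?ev2_opp /dopp; first by ring.
by move=> p q; rewrite mulrN.
Qed.
Lemma delta_add a d c v : ev c (delta (fun w => a w + d w) v) = ev c (delta a v) + ev c (delta d v).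
Proof.
rewrite !ev_delta (eq_ev2 (b' := fun p q => c p * a q + c p * d q)) ?ev2_add.
  by rewrite mulrDl; ring.
by move=> p q; rewrite mulrDr.
Qed.
Lemma delta_ext a d c v : a =1 d -> ev c (delta a v) = ev c (delta d v).
Proof. by move=> h; rewrite !ev_delta h (eq_ev2 (b' := fun p q => c p * d q)) // => p q; rewrite h. Qed.

Lemma key f : am f -> (forall w, CMf f w) -> forall gm v c,
  ev c (lin (delta gm) (f v)) = ev c (lin f (delta (dcomp gm f) v)).
Proof.
move=> [f0 fm] cm gm v c; rewrite !ev_lin.
rewrite (eq_ev (c := fun z => ev2 (fun p q => c p * gm q) (D z) - c F0 * gm z)); last first.
  by move=> z; rewrite ev_delta mulrC.
rewrite ev_sub ev_scale cm ev_delta f0 /dcomp; congr (_ - _); last by rewrite mulrC.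
apply: eq_ev2 => x y; rewrite -ev_scaler; apply: eq_ev => x'.
by rewrite -ev_scale.
Qed.

Lemma am_eid : am (eid K).
Proof. by split=> [a|u w a]; rewrite /eid ?ev_vmul !ev_fbasis // ev_fbasis. Qed.
Lemma bpc_eid : bpc (eid K) (eBp K).
Proof. by move=> w a; rewrite /eid ev_lin !ev_fbasis. Qed.

Lemma am_comp f g : am f -> am g -> am (ecomp f g).
Proof.
move=> [f0 fm] [g0 gm]; split=> [a|u w a]; rewrite /ecomp ev_lin.
  by rewrite g0 f0.
rewrite gm !ev_vmul (ev_lin (fun u => ev (fun w => a (fmul u w)) (lin f (g w)))); apply: eq_ev => s.
rewrite [RHS](eq_ev (c := fun p => ev (fun t => ev (fun q => a (fmul p q)) (f t)) (g w))); last first.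
  by move=> p; rewrite ev_lin.
rewrite ev_exch; apply: eq_ev => t.
by rewrite fm ev_vmul.
Qed.
Lemma bpc_comp f g Mg M' : bpc g Mg -> (forall z c, ev c (lin f (Mg z)) = ev c (lin M' (f z))) ->
  bpc (ecomp f g) M'.
Proof.
move=> gb h w c; rewrite /ecomp ev_lin gb ev_lin ev_lin ev_lin.
by apply: eq_ev => z; rewrite -ev_lin h ev_lin.
Qed.

Lemma lin_eadd f g v c : ev c (lin (eadd f g) v) = ev c (lin f v) + ev c (lin g v).
Proof. by rewrite !ev_lin -ev_add; apply: eq_ev => z; rewrite ev_cat. Qed.

Lemma theta_Bp2 a z c : ev c (theta a (Bp z)) =
   ev c (lin (eBp K) (theta a z)) + ev c (lin (delta a) (theta a z)).
Proof. by rewrite (bpc_theta a) -lin_eadd. Qed.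
Lemma lin_Mth f a z c : ev c (lin f (Mth a z)) = ev c (f (Bp z)) + ev c (lin f (delta a z)).
Proof. by rewrite !ev_lin /Mth /eadd ev_cat ev_fbasis. Qed.

Lemma key_theta a gm v c :
  ev c (lin (delta gm) (theta a v)) = ev c (lin (theta a) (delta (dcomp gm (theta a)) v)).
Proof. exact: (key (am_theta a) (CM_theta a)). Qed.

Lemma lin_ext f x y : (forall c, ev c x = ev c y) -> forall c, ev c (lin f x) = ev c (lin f y).
Proof. by move=> h c; rewrite !ev_lin h. Qed.
Lemma lin_extf f g x : veqf f g -> forall c, ev c (lin f x) = ev c (lin g x).
Proof. by move=> h c; rewrite !ev_lin; apply: eq_ev => z; rewrite h. Qed.

Lemma theta_ginv_delta a z c :
  ev c (lin (theta a) (delta (ginv a) z)) = - ev c (lin (delta a) (theta a z)).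
Proof. by rewrite key_theta !ev_lin -delta_opp. Qed.

Lemma theta_inv_r a : veqf (ecomp (theta a) (theta (ginv a))) (eid K).
Proof.
apply: (am_unique (M := eBp K)).
- exact: am_comp (am_theta _) (am_theta _).
- exact: am_eid.
- apply: bpc_comp (bpc_theta _) _ => z c.
  by rewrite lin_Mth theta_Bp2 theta_ginv_delta addrK.
- exact: bpc_eid.
Qed.
End Group.

Section Group2.
Variable K : fieldType.
Implicit Types (b : forest -> forest -> K) (a c d : dual K) (f g M : endo K).
Local Notation D := (Delta K).

Lemma ginv_ginv a : ginv (ginv a) =1 a.
Proof.
move=> w; rewrite /ginv /dopp /dcomp ev_opp opprK.
by rewrite -ev_lin (theta_inv_r a w a) /eid ev_fbasis.
Qed.
Lemma ginv_ginvE a : ginv (ginv a) = a.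
Proof. apply: functional_extensionality; exact: ginv_ginv. Qed.

Lemma theta_inv_l a : veqf (ecomp (theta (ginv a)) (theta a)) (eid K).
Proof. by have := theta_inv_r (ginv a); rewrite ginv_ginvE. Qed.

Lemma dcomp_inv a d : dcomp (dcomp d (theta (ginv a))) (theta a) =1 d.
Proof. by move=> w; rewrite /dcomp -ev_lin (theta_inv_l a w d) /eid ev_fbasis. Qed.

Lemma lin_delta_add a d x c :
  ev c (lin (delta (fun w => a w + d w)) x) = ev c (lin (delta a) x) + ev c (lin (delta d) x).
Proof. by rewrite !ev_lin -ev_add; apply: eq_ev => z; rewrite delta_add. Qed.

Lemma theta_comp a d : veqf (ecomp (theta a) (theta d)) (theta (bullet a d)).
Proof.
apply: (am_unique (M := Mth (bullet a d))).
- exact: am_comp (am_theta _) (am_theta _).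
- exact: am_theta.
- apply: bpc_comp (bpc_theta _) _ => z c.
  rewrite lin_Mth theta_Bp2 /Mth lin_eadd /bullet lin_delta_add -addrA; congr (_ + _).
  congr (_ + _); rewrite key_theta !ev_lin.
  by apply: delta_ext => w; rewrite dcomp_inv.
- exact: bpc_theta.
Qed.

Lemma eeq_veqf f g : eeq f g <-> veqf f g.
Proof.
split=> h w; first by move=> c; apply: (proj1 (veqP _ _) (h w)).
by apply/veqP => c; apply: h.
Qed.

Lemma delta_veq a d : (forall v c, ev c (delta a v) = ev c (delta d v)) ->
  forall v c, ev c (lin (delta a) v) = ev c (lin (delta d) v).
Proof. by move=> h v c; rewrite !ev_lin; apply: eq_ev => z; apply: h. Qed.

Lemma theta_delta_inj a d : veqf (theta a) (theta d) -> forall v c, ev c (delta a v) = ev c (delta d v).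
Proof.
move=> h.
have H1 : forall w c, ev c (lin (delta a) (theta a w)) = ev c (lin (delta d) (theta a w)).
  move=> w c; have := h (Bp w) c; rewrite !theta_Bp2.
  rewrite (lin_ext (eBp K) (h w)) (lin_ext (delta d) (h w)).
  by move/addrI.
move=> v c.
have E : forall x, ev c (delta x v) = ev (fun y => ev c (lin (delta x) (theta a y))) (theta (ginv a) v).
  move=> x; transitivity (ev c (lin (delta x) (ecomp (theta a) (theta (ginv a)) v))).
    by rewrite (lin_ext _ (theta_inv_r a v)) /eid ev_lin ev_fbasis.
  by rewrite /ecomp ev_lin ev_lin; apply: eq_ev => y; rewrite ev_lin.
by rewrite !E; apply: eq_ev => y; apply: H1.
Qed.

Lemma veqf_trans f g h : veqf f g -> veqf g h -> veqf f h.
Proof. by move=> h1 h2 w c; rewrite h1 h2. Qed.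
Lemma veqf_sym f g : veqf f g -> veqf g f.
Proof. by move=> h w c; rewrite h. Qed.
Lemma ecomp_veqf f f' g g' : veqf f f' -> veqf g g' -> veqf (ecomp f g) (ecomp f' g').
Proof. by move=> hf hg w c; rewrite /ecomp !ev_lin hg; apply: eq_ev => z; rewrite hf. Qed.
Lemma ecompA f g h : veqf (ecomp f (ecomp g h)) (ecomp (ecomp f g) h).
Proof. by move=> w c; rewrite /ecomp !ev_lin; apply: eq_ev => z; rewrite ev_lin. Qed.

Lemma theta_ext a d : a =1 d -> theta a = theta d.
Proof. by move=> h; rewrite (functional_extensionality _ _ h). Qed.

Lemma ginv0 : ginv (dzero K) =1 dzero K.
Proof. by move=> w; rewrite /ginv /dopp /dcomp /dzero ev0 oppr0. Qed.

Lemma theta0 : veqf (theta (dzero K)) (eid K).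
Proof.
apply: (am_unique (M := eBp K)).
- exact: am_theta.
- exact: am_eid.
- move=> w c; rewrite theta_Bp2.
  have -> : ev c (lin (delta (dzero K)) (theta (dzero K) w)) = 0; last by rewrite addr0.
  rewrite ev_lin (eq_ev (c := fun _ => 0)) ?ev0 //.
  by move=> z; rewrite ev_delta /dzero (eq_ev2 (b' := fun _ _ => 0)) ?ev2_0 ?mul0r ?subrr // => p q; rewrite mulr0.
- exact: bpc_eid.
Qed.
End Group2.

Section Deg.
Variable K : fieldType.
Implicit Types (b : forest -> forest -> K) (a c d : dual K) (f g M : endo K).
Local Notation D := (Delta K).

Lemma ev2_vanish b z : (forall p q, (fsize p + fsize q)%N = fsize z -> b p q = 0) -> ev2 b (D z) = 0.
Proof.
move=> h; rewrite Delta_size (eq_ev2 (b' := fun _ _ => 0)) ?ev2_0 // => p q.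
by case: eqP => // /h.
Qed.

Lemma M_vanish a c z : (forall u, (fsize u <= fsize z)%N -> c u = 0) ->
  ev c (Mth a z) = c (Bp z).
Proof.
move=> h; rewrite ev_M ev2_vanish; first by rewrite (h F0) ?fsize_F0 // mulr0 subrr addr0.
move=> p q e; rewrite h ?mul0r // -e; exact: leq_addr.
Qed.

Lemma deg_theta a w : forall c, (forall u, (fsize u < fsize w)%N -> c u = 0) -> ev c (theta a w) = c w.
Proof.
have Q : forall w, (forall c, (forall u, (fsize u < fsize w)%N -> c u = 0) -> ev c (theta a w) = c w) ->
   forall c, (forall u, (fsize u <= fsize w)%N -> c u = 0) -> ev c (theta a w) = 0.
  by move=> w' P c h; rewrite P ?h // => u /ltnW; apply: h.
elim/forest_ind: w => [|ch r IHc IHr].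
  by move=> c _; rewrite theta_F0 ev_vone.
have PB : forall c, (forall u, (fsize u < fsize (Bp ch))%N -> c u = 0) -> ev c (theta a (Bp ch)) = c (Bp ch).
  move=> c h; rewrite (bpc_theta a) ev_lin IHc.
    by rewrite M_vanish // => u hu; apply: h; rewrite fsize_Bp ltnS.
  move=> z hz; rewrite M_vanish; first by apply: h; rewrite !fsize_Bp ltnS.
  by move=> u hu; apply: h; rewrite fsize_Bp ltnS; apply: leq_trans hu (ltnW hz).
move=> c h; rewrite (am_theta a).2 ev_vmul PB.
  rewrite IHr // => t ht; apply: h; rewrite !fsize_fmul ltn_add2l //.
move=> s hs; apply: (Q _ IHr) => t ht; apply: h.
rewrite !fsize_fmul; apply: leq_trans (leq_add hs ht) _.
by rewrite addSn.
Qed.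

Lemma part1 a w u : (fsize w <= fsize u)%N -> coef (theta a w) u = coef (fbasis K w) u.
Proof.
move=> h; have E : forall v : vec K, coef v u = ev (fun x => (x == u)%:R) v by move=> v; exact: gcoefE.
rewrite !E ev_fbasis deg_theta //.
move=> u' hu; case: eqP => // e; move: hu; rewrite e ltnNge h.
by [].
Qed.
End Deg.

Definition dot : forest := Bp F0.
Definition iso (w : forest) : nat := count (fun t => t == RNode [::]) (fval w).

Lemma iso_fmul u v : iso (fmul u v) = (iso u + iso v)%N.
Proof. by rewrite /iso (permP (fval_fmul u v)) count_cat. Qed.
Lemma iso_F0 : iso F0 = 0%N. Proof. by []. Qed.
Lemma iso_Bp c : iso (Bp c) = (c == F0).
Proof.
rewrite /iso fval_Bp /= addn0; case: eqP => [[] h|h]; case: eqP => // e.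
  by case: e; apply: forest0.
by case: h; rewrite e.
Qed.
Lemma iso_dot : iso dot = 1%N. Proof. by rewrite /dot iso_Bp eqxx. Qed.
Lemma fsize_dot : fsize dot = 1%N. Proof. by rewrite /dot fsize_Bp. Qed.

Lemma iso_le w : (iso w <= fsize w)%N.
Proof.
rewrite /iso /fsize; elim: (fval w) => //= t s IH.
by apply: leq_add => //; case: t => cs /=; case: eqP.
Qed.

Lemma dot_in w : (0 < iso w)%N -> exists r, w = fmul dot r.
Proof.
rewrite /iso -has_count => /hasP[t tw /eqP et]; subst t.
exists (mkF (rem (RNode [::]) (fval w))); apply: forest_eq.
rewrite (permPr (fval_fmul _ _)) fval_Bp /= (permPl (perm_to_rem tw)) /=.
rewrite perm_cons perm_sym (permPl (fval_mkF _)) map_id_in //.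
by move=> t /mem_rem/canon_in.
Qed.

Lemma tsize_pos t : (0 < Defs.tsize t)%N. Proof. by case: t. Qed.
Lemma tsize_node cs : Defs.tsize (RNode cs) = (sumn (map Defs.tsize cs)).+1. Proof. by []. Qed.
Lemma fsize1 w : fsize w = 1%N -> w = dot.
Proof.
move=> h; apply: forest_eq; rewrite /dot fval_Bp (_ : fval F0 = [::]) //.
move: h; rewrite /fsize; case: (fval w) => [|t s] //.
case: t => cs; case: s => [|t' s].
  rewrite /= addn0 => -[]; case: cs => [|t cs] //.
  by rewrite map_cons /=; move: (tsize_pos t); lia.
by rewrite map_cons /=; move: (tsize_pos t'); lia.
Qed.
Lemma dotE w : (w == dot) = (fsize w == 1%N).
Proof. by apply/eqP/eqP => [->|/fsize1 //]; rewrite fsize_dot. Qed.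
Lemma F0E w : (w == F0) = (fsize w == 0%N).
Proof. by apply/eqP/eqP => [->|/fsize0 //]. Qed.

Section Leaf.
Variable K : fieldType.
Implicit Types (b : forest -> forest -> K) (a c d k h : dual K).
Local Notation D := (Delta K).
Local Notation e := (eps K).
Definition ell k w := ev2 (fun x y => (x == dot)%:R * k y) (D w).

Lemma dot_fmul (u1 v1 : forest) : ((fmul u1 v1 == dot)%:R : K) =
  (u1 == dot)%:R * e v1 + e u1 * (v1 == dot)%:R.
Proof.
rewrite /eps !dotE !F0E fsize_fmul.
case: (fsize u1) => [|[|n]]; case: (fsize v1) => [|[|m]] //=; rewrite ?mulr0 ?mul0r ?addr0 ?add0r ?mulr1 //.
Qed.

Lemma ell_mul k u v : ell k (fmul u v) = ell (fun y => k (fmul y v)) u + ell (fun y => k (fmul u y)) v.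
Proof.
rewrite /ell Delta_mul ev2_vmul2.
rewrite (eq_ev2 (b' := fun u1 u2 => (u1 == dot)%:R * ev2 (fun v1 v2 => e v1 * k (fmul u2 v2)) (D v) +
    e u1 * ev2 (fun v1 v2 => (v1 == dot)%:R * k (fmul u2 v2)) (D v))); last first.
  move=> u1 u2; rewrite -!ev2_scale -ev2_add; apply: eq_ev2 => v1 v2.
  by rewrite dot_fmul; ring.
rewrite ev2_add; congr (_ + _).
  by apply: eq_ev2 => u1 u2; rewrite (counit_l v (fun z => k (fmul u2 z))).
exact: (counit_l u (fun z => ev2 (fun v1 v2 => (v1 == dot)%:R * k (fmul z v2)) (D v))).
Qed.

Lemma ell_Bp k (c : forest) : ell k (Bp c) = (Bp c == dot)%:R * k F0 + ell (fun y => k (Bp y)) c.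
Proof. by rewrite /ell (@Delta_Bp K). Qed.

Lemma ell_F0 k : ell k F0 = 0.
Proof. by rewrite /ell Delta_F0 ev2_vone2 dotE fsize_F0 mul0r. Qed.
Lemma ell0 k w : (forall y, k y = 0) -> ell k w = 0.
Proof. by move=> h; rewrite /ell (eq_ev2 (b' := fun _ _ => 0)) ?ev2_0 // => p q; rewrite h mulr0. Qed.

Lemma leaf w : forall k v, (forall y, (iso w <= iso y)%N -> k y = 0) -> w = fmul dot v ->
  ell k w = (iso w)%:R * k v.
Proof.
elim/forest_ind: w => [|ch r IHc IHr] k v hk ew.
  by move: (congr1 fsize ew); rewrite fsize_fmul fsize_dot.
rewrite ell_mul ell_Bp.
case: (ch =P F0) => [ech|nch].
  subst ch; rewrite -/dot eqxx mul1r /= fmul0f ell_F0 addr0.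
  have evr : v = r by apply: (fmulI (u := dot)); rewrite -ew.
  subst v; rewrite iso_fmul iso_dot.
  case: (posnP (iso r)) => [i0|ip].
    rewrite i0 ell0 ?addr0 ?mul1r // => y; apply: hk; rewrite iso_fmul iso_dot i0.
    by rewrite iso_fmul iso_dot.
  have [r' er'] := dot_in ip.
  rewrite (IHr (fun y => k (fmul dot y)) r') //; last first.
    by move=> y hy; apply: hk; rewrite !iso_fmul iso_dot leq_add2l.
  by rewrite -er' natrD mulrDl mul1r.
have ic : iso (Bp ch) = 0%N by rewrite iso_Bp; case: eqP.
have bnd : (Bp ch == dot) = false by apply/eqP => /Bp_inj.
rewrite bnd mul0r add0r ell0 ?add0r; last first.
  by move=> y; apply: hk; rewrite !iso_fmul ic iso_Bp leq_add2r leq0n.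
have ip : (0 < iso r)%N.
  by move: (congr1 iso ew); rewrite !iso_fmul ic iso_dot add0n => ->.
have [r' er'] := dot_in ip.
have ev' : v = fmul (Bp ch) r'.
  by apply: (fmulI (u := dot)); rewrite -ew er' fmulA [fmul (Bp ch) dot]fmulC -fmulA.
rewrite (IHr (fun y => k (fmul (Bp ch) y)) r') //; last first.
  by move=> y hy; apply: hk; rewrite !iso_fmul ic.
by rewrite iso_fmul ic add0n ev'.
Qed.
End Leaf.

Section DeltaInj.
Variable K : fieldType.
Hypothesis charK : [pchar K] =i pred0.
Implicit Types (b : forest -> forest -> K) (a c d k h : dual K).
Local Notation D := (Delta K).

Lemma ell_delta a w : ell a w = ev (fun x => (x == dot)%:R) (delta a w).
Proof. by rewrite ev_delta dotE fsize_F0 /= mulr0 subr0. Qed.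

Lemma natf_neq0 n : (n.+1%:R : K) != 0.
Proof.
apply/negP => h; have [p hp] := natf0_pchar (ltn0Sn n) h.
by move: hp; rewrite charK.
Qed.

Lemma delta_inj a d : (forall v c, ev c (delta a v) = ev c (delta d v)) -> a =1 d.
Proof.
move=> H.
have Hl : forall w, ell (fun y => a y - d y) w = 0.
  move=> w; rewrite /ell (eq_ev2 (b' := fun x y => (x == dot)%:R * a y - (x == dot)%:R * d y)).
    by rewrite ev2_sub -/(ell a w) -/(ell d w) !ell_delta H subrr.
  by move=> p q; rewrite mulrBr.
suff S : forall n v, (fsize v - iso v < n)%N -> a v = d v.
  by move=> v; apply: (S (fsize v - iso v).+1).
elim=> [|n IHn] v //= hv.
pose k y := if fsize y == fsize v then a y - d y else 0.
have hk : forall y, (iso (fmul dot v) <= iso y)%N -> k y = 0.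
  move=> y; rewrite /k iso_fmul iso_dot; case: eqP => // e hy.
  apply/eqP; rewrite subr_eq0; apply/eqP; apply: IHn.
  have := iso_le y; have := iso_le v; move: hv hy e; lia.
have := leaf hk (erefl (fmul dot v)).
have -> : ell k (fmul dot v) = 0.
  rewrite -(Hl (fmul dot v)) /ell Delta_size [RHS]Delta_size; apply: eq_ev2 => p q.
  case: eqP => // e; rewrite /k; case: (p =P dot) => [ep|]; last by rewrite !mul0r.
  move: e; rewrite ep fsize_fmul fsize_dot add1n => -[->]; by rewrite eqxx.
rewrite iso_fmul iso_dot add1n => /esym/eqP; rewrite mulf_eq0 (negbTE (natf_neq0 _)) /=.
by rewrite /k eqxx subr_eq0 => /eqP.
Qed.
End DeltaInj.

Section Antipode.
Variable K : fieldType.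
Implicit Types (b : forest -> forest -> K) (a c d k h : dual K) (f g S T : endo K).
Local Notation D := (Delta K).
Local Notation e := (eps K).

Definition Phi f T c w :=
  ev2 (fun x y => ev (fun x' => ev (fun y' => c (fmul x' y')) (f y)) (T x)) (D w).
Definition LC f T := forall w c, Phi f T c w = e w * c F0.

Lemma LC_unique f T1 T2 : am f -> LC f T1 -> LC f T2 -> forall w c, ev c (T1 w) = ev c (T2 w).
Proof.
move=> [f0 fm] h1 h2 w.
suff SS : forall n w, (fsize w < n)%N -> forall c, ev c (T1 w) = ev c (T2 w) by apply: (SS (fsize w).+1).
elim=> [|n IHn] {}w hw c; first by rewrite ltn0 in hw.
pose B T x y := ev (fun x' => ev (fun y' => c (fmul x' y')) (f y)) (T x).
have E0 : ev2 (fun x y => B T1 x y - B T2 x y) (D w) = 0.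
  by rewrite ev2_sub -/(Phi f T1 c w) -/(Phi f T2 c w) h1 h2 subrr.
pose hh x := if fsize x == fsize w then B T1 x F0 - B T2 x F0 else 0.
have E1 : ev2 (fun x y => B T1 x y - B T2 x y) (D w) = ev2 (fun x y => hh x * e y) (D w).
  rewrite Delta_size [RHS]Delta_size; apply: eq_ev2 => x y; rewrite /hh /eps.
  case: ((fsize x + fsize y)%N =P fsize w) => [exy|nxy].
    case: (fsize x =P fsize w) => [ex|nx].
      have ey : y = F0 by apply: fsize0; move: exy; rewrite ex; lia.
      by rewrite ey eqxx mulr1.
    rewrite mul0r; apply/eqP; rewrite subr_eq0; apply/eqP.
    rewrite /B; apply: IHn; move: hw exy nx; lia.
  by [].
move: E0; rewrite E1 (counit_r w hh) /hh eqxx /B => /eqP; rewrite subr_eq0 => /eqP.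
by rewrite (eq_ev (c := fun x' => c x')) ?[in X in _ = X -> _](eq_ev (c := fun x' => c x')) //
   => x'; rewrite f0 fmulf0.
Qed.

Lemma antipode_ev S w c : is_antipode S ->
  ev2 (fun u v => ev (fun x' => c (fmul x' v)) (S u)) (D w) = e w * c F0.
Proof.
move=> /(_ w) [/veqP H _]; have := H c.
rewrite ev_vmulT ev2_tmap ev_vscale ev_vone => <-.
by apply: eq_ev2 => u v; apply: eq_ev => x'; rewrite /eid ev_fbasis.
Qed.

Lemma LC_fS f S : am f -> is_antipode S -> LC f (ecomp f S).
Proof.
move=> [f0 fm] hS w c; rewrite /Phi.
rewrite (eq_ev2 (b' := fun u v => ev (fun x' => ev c (f (fmul x' v))) (S u))); last first.
  move=> x y; rewrite /ecomp ev_lin; apply: eq_ev => s.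
  by rewrite fm ev_vmul.
apply: eq_trans (antipode_ev w (fun z => ev c (f z)) hS) _.
by rewrite f0.
Qed.

Lemma LC_Sf f S : am f -> (forall w, CMf f w) -> (forall w, ev e (f w) = e w) ->
  is_antipode S -> LC f (ecomp S f).
Proof.
move=> [f0 fm] cm ce hS w c; rewrite /Phi.
pose b u v := ev (fun x' => c (fmul x' v)) (S u).
transitivity (ev (fun z => ev2 b (D z)) (f w)); last first.
  rewrite (eq_ev (c := fun z => e z * c F0)); last by move=> z; exact: antipode_ev.
  by rewrite ev_scaler ce.
rewrite cm; apply: eq_ev2 => x y; rewrite /ecomp ev_lin; apply: eq_ev => u.
by rewrite /b ev_exch.
Qed.

Lemma theta_antipode a S : is_antipode S -> eeq (ecomp (theta a) S) (ecomp S (theta a)).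
Proof.
move=> hS; apply/eeq_veqf => w c.
apply: (LC_unique (am_theta a)); first exact: LC_fS (am_theta a) hS.
exact: LC_Sf (am_theta a) (CM_theta a) (counit_theta a) hS.
Qed.

Lemma theta_coalg a : coalg_morph (theta a).
Proof.
move=> w; split; last exact: counit_theta.
apply/veq2P => b; rewrite ev2_Delta_lin CM_theta ev2_tmap //.
Qed.

Lemma theta_alg a : alg_morph (theta a).
Proof.
split; first by rewrite theta_F0 => u.
by move=> u v; apply/veqP => c; apply: (am_theta a).2.
Qed.
End Antipode.

Lemma veqf_refl (K : fieldType) (f : endo K) : veqf f f.
Proof. by []. Qed.

Theorem mainTheorem15 (K : fieldType) (charK : [pchar K] =i pred0) :
  (* (1) theta_alpha(w) - w lies in degrees < |w| *)
  (forall (a : dual K) (w u : forest),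
      (fsize w <= fsize u)%N -> coef (theta a w) u = coef (fbasis K w) u)
  (* (2) Hopf automorphism, inverse, composition law *)
  /\ (forall a : dual K,
        hopf_aut (theta a)
        /\ eeq (ecomp (theta a) (theta (ginv a))) (eid K)
        /\ eeq (ecomp (theta (ginv a)) (theta a)) (eid K))
  /\ (forall a b : dual K, eeq (ecomp (theta a) (theta b)) (theta (bullet a b)))
  (* (3) injectivity and group structure *)
  /\ (forall a b : dual K, eeq (delta a) (delta b) -> a =1 b)
  /\ (forall a b : dual K, eeq (theta a) (theta b) -> a =1 b)
  /\ (forall a b c : dual K, bullet (bullet a b) c =1 bullet a (bullet b c))
  /\ (forall a : dual K, bullet (dzero K) a =1 a /\ bullet a (dzero K) =1 a)
  /\ (forall a : dual K, bullet a (ginv a) =1 dzero K /\ bullet (ginv a) a =1 dzero K).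
Proof.
have Tinj : forall a b : dual K, eeq (theta a) (theta b) -> a =1 b.
  move=> a b /eeq_veqf h; apply: (delta_inj charK); exact: theta_delta_inj.
split; first exact: part1.
split.
  move=> a; have r := (eeq_veqf _ _).2 (theta_inv_r a).
  have l := (eeq_veqf _ _).2 (theta_inv_l a).
  split; last by split.
  split; last by exists (theta (ginv a)).
  split; [exact: theta_alg | exact: theta_coalg | exact: theta_antipode].
split; first by move=> a b; apply/eeq_veqf; exact: theta_comp.
split.
  move=> a b /eeq_veqf h; apply: (delta_inj charK) => v c; exact: h.
split; first exact: Tinj.
split.
  move=> a b c; apply: Tinj; apply/eeq_veqf.
  apply: veqf_trans (veqf_sym (theta_comp _ _)) _.
  apply: veqf_trans (ecomp_veqf (veqf_sym (theta_comp a b)) (veqf_refl _)) _.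
  apply: veqf_trans (veqf_sym (ecompA _ _ _)) _.
  apply: veqf_trans (ecomp_veqf (veqf_refl _) (theta_comp b c)) _.
  exact: theta_comp.
split.
  move=> a; split=> w.
    rewrite /bullet (_ : dzero K w = 0) // add0r /dcomp (theta_ext (@ginv0 K)).
    by rewrite (theta0 w a) /eid ev_fbasis.
  by rewrite /bullet /dcomp /dzero ev0 addr0.
move=> a; split=> w; rewrite /bullet /dzero /dcomp.
  rewrite /ginv /dopp /dcomp ev_opp -ev_lin.
  by rewrite (theta_inv_r a w a) /eid ev_fbasis subrr.
by rewrite ginv_ginvE /ginv /dopp /dcomp addNr.
Qed.
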